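(* Let $\mathcal C$ be a Clifford circuit with linear outcome code and $M$ a positive integer. The Low-Weight Stabilizer Algorithm on input $(\mathcal C,M)$ returns exactly the set of all connected stabilizers of the spacetime code of $\mathcal C$ of weight at most $M$.
   Context: A Clifford circuit on $n$ qubits is a finite sequence of operations, each a unitary Clifford gate or the measurement of a Hermitian $n$-qubit Pauli, each with a level in $\{1,2,\dots\}$; operations of equal level have disjoint supports and levels are nondecreasing; depth $\Delta$ = maximal level. In circuit order the $j$-th measurement measures $S_j$ at level $\ell_j$ ($j=1,\dots,m$); outcome $o_j=0$ for eigenvalue $+1$, $1$ for $-1$. The outcome code $\mathcal O(\mathcal C)$ is the set of outcome bit-strings occurring with nonzero probability for some input state; $\perp$ refers to $(u|v)=\sum u_iv_i\bmod 2$. $\overline{\mathcal P}_N$ is the $N$-qubit Pauli group modulo phases; $U_\ell$ is the product of unitary gates of level $\ell$. Fault operators $F\in\overline{\mathcal P}_{n(\Delta+1)}$ act on qubits $(\ell+0.5,q)$, $0\le\ell\le\Delta$, $1\le q\le n$, with level components $F_{\ell+0.5}$; $\eta_{\ell+0.5}(P)$ is $P$ at level $\ell+0.5$ and $I$ elsewhere. Back-cumulant $\overleftarrow F$: start with $F$; for $\ell=\Delta,\dots,1$ replace $\overleftarrow F_{\ell-0.5}$ by $\overleftarrow F_{\ell-0.5}\cdot U_\ell^{-1}\overleftarrow F_{\ell+0.5}U_\ell$. $F(u)=\prod_j\eta_{\ell_j-0.5}(S_j^{u_j})$. The stabilizers of the spacetime code are the elements of $\{\overleftarrow{F(u)}:u\in\mathcal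 O(\mathcal C)^\perp\}$; the weight of a stabilizer is the number of qubits on which it acts nontrivially. The spacetime graph $G$ has vertex set $\{1,\dots,n\}\times\{0.5,1.5,\dots,\Delta+0.5\}$ (vertex $(q,\ell+0.5)$ identified with qubit $(\ell+0.5,q)$), and for every operation of level $\ell$ acting on qubits $q_1,\dots,q_t$, all vertices $(q_i,\ell-0.5)$, $(q_i,\ell+0.5)$, $i=1,\dots,t$, are pairwise joined by edges. A stabilizer is connected if its support is nonempty and connected in $G$. Low-Weight Stabilizer Algorithm: start with an empty output set; for every vertex $v$ of $G$, let $A$ be the set of vertices at graph distance at most $\lfloor M/2\rfloor$ from $v$, compute a generating set of the subgroup of stabilizers of the spacetime code whose support is contained in $A$, and add to the output every element of this subgroup of weight at most $M$ whose support is nonempty and connected in $G$. *)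

(* Defs.v *)
From HB Require Import structures.
From mathcomp Require Import all_boot all_order all_algebra.
Set Implicit Arguments.
Unset Strict Implicit.
Unset Printing Implicit Defensive.
Import Order.TTheory GRing.Theory Num.Theory.
Local Open Scope ring_scope.

Section Defs.
Variable C : numClosedFieldType.
Variable n : nat.

Definition basis := {ffun 'I_n -> bool}.
Definition state := basis -> C.
Definition oper := basis -> basis -> C.     (* matrix entries <a|A|b> *)

Definition opapply (A : oper) (psi : state) : state :=
  fun a => \sum_(b : basis) A a b * psi b.
Definition opmul (A B : oper) : oper :=
  fun a c => \sum_(b : basis) A a b * B b c.
Definition opadj (A : oper) : oper := fun a b => (A b a)^*.
Definition opid : oper := fun a b => (a == b)%:R.

Definition unitary (U : oper) : Prop :=
  forall a b, opmul (opadj U) U a b = opid a b.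

(* operator acting (at most) on the qubits of Q: U = V (x) I_{complement} *)
Definition agreeOn (Q : {set 'I_n}) (a b : basis) := [forall q in Q, a q == b q].
Definition agreeOff (Q : {set 'I_n}) (a b : basis) := agreeOn (~: Q) a b.
Definition oper_supported_on (Q : {set 'I_n}) (U : oper) : Prop :=
  (forall a b, ~~ agreeOff Q a b -> U a b = 0) /\
  (forall a b a' b', agreeOff Q a b -> agreeOff Q a' b' ->
     agreeOn Q a a' -> agreeOn Q b b' -> U a b = U a' b').

(* P q = (x_q, z_q): I = (0,0), X = (1,0), Z = (0,1), Y = (1,1) *)
Definition pauli := {ffun 'I_n -> bool * bool}.
Definition pauliI : pauli := [ffun _ => (false, false)].
Definition pmul1 (s t : bool * bool) : bool * bool := (s.1 (+) t.1, s.2 (+) t.2).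
Definition pmul (P Q : pauli) : pauli := [ffun q => pmul1 (P q) (Q q)].
Definition pauli_supp (P : pauli) : {set 'I_n} := [set q | P q != (false, false)].

(* Hermitian representative  (tensor of I, X, Y, Z):
   <a| X^x Z^z |b> = (-1)^{z.b} [a = b + x],  Y = i X Z *)
Definition pauliOp (P : pauli) : oper := fun a b =>
  if [forall q, a q == (b q (+) (P q).1)]
  then 'i ^+ #|[set q | (P q).1 && (P q).2]| * (-1) ^+ #|[set q | (P q).2 && b q]|
  else 0.

(* projector onto outcome o of the measurement of the Hermitian Pauli
   (-1)^s pauliOp P :  (I + (-1)^o (-1)^s P) / 2 *)
Definition measProj (s : bool) (P : pauli) (o : bool) : oper := fun a b =>
  (opid a b + (-1) ^+ (o + s) * pauliOp P a b) / 2%:R.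

(* Gate U act Q l : unitary U on the qubits Q at level l, with
     act P = the class of U^{-1} P U modulo phases;
   Meas s P Q l   : measurement of (-1)^s P, acting on qubits Q, level l *)
Inductive operation :=
| Gate of oper & (pauli -> pauli) & {set 'I_n} & nat
| Meas of bool & pauli & {set 'I_n} & nat.

Definition op_level (o : operation) : nat :=
  match o with Gate _ _ _ l => l | Meas _ _ _ l => l end.
Definition op_qubits (o : operation) : {set 'I_n} :=
  match o with Gate _ _ Q _ => Q | Meas _ _ Q _ => Q end.

Definition circuit := seq operation.
Definition dummy_op : operation := Meas false pauliI set0 0.

Definition wf_operation (o : operation) : Prop :=
  match o with
  | Gate U act Q l =>
      [/\ (1 <= l)%N, unitary U, oper_supported_on Q U &
        forall P : pauli, exists c : C, c != 0 /\
          forall a b, opmul (opadj U) (opmul (pauliOp P) U) a b = c * pauliOp (act P) a b]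
  | Meas s P Q l => (1 <= l)%N /\ pauli_supp P \subset Q
  end.

Definition wf_circuit (c : circuit) : Prop :=
  [/\ forall i, (i < size c)%N -> wf_operation (nth dummy_op c i),
      sorted leq (map op_level c) &
      forall i j, (i < j < size c)%N ->
        op_level (nth dummy_op c i) = op_level (nth dummy_op c j) ->
        [disjoint op_qubits (nth dummy_op c i) & op_qubits (nth dummy_op c j)]].

Definition depth (c : circuit) : nat := \max_(o <- c) op_level o.

Definition measOf (o : operation) : option (pauli * nat) :=
  match o with Meas _ P _ l => Some (P, l) | _ => None end.
(* the measured Paulis S_j (mod phases) with their levels l_j, circuit order *)
Definition meas (c : circuit) : seq (pauli * nat) := pmap measOf c.
Definition nmeas (c : circuit) : nat := size (meas c).

(* run the circuit on psi with measurement outcomes os (unnormalised) *)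
Fixpoint run (c : circuit) (os : seq bool) (psi : state) : state :=
  match c with
  | [::] => psi
  | Gate U _ _ _ :: r => run r os (opapply U psi)
  | Meas s P _ _ :: r => run r (behead os) (opapply (measProj s P (head false os)) psi)
  end.

Definition outcome_code (c : circuit) (o : seq bool) : Prop :=
  size o = nmeas c /\ exists (psi : state) (b : basis), run c o psi b != 0.

Definition bdot (u v : seq bool) : bool :=
  odd (\sum_(i < size u) (nth false u i && nth false v i)).
Definition bxor (u v : seq bool) : seq bool := [seq p.1 (+) p.2 | p <- zip u v].

Definition linear_outcome_code (c : circuit) : Prop :=
  outcome_code c (nseq (nmeas c) false) /\
  forall o1 o2, outcome_code c o1 -> outcome_code c o2 -> outcome_code c (bxor o1 o2).

Definition outcome_perp (c : circuit) (u : seq bool) : Prop :=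
  size u = nmeas c /\ forall o, outcome_code c o -> bdot u o = false.

(* vertex / spacetime qubit (q, k) stands for (q, k + 0.5), 0 <= k <= depth *)
Definition vertex (c : circuit) := ('I_n * 'I_(depth c).+1)%type.
Definition fault (c : circuit) := {ffun vertex c -> bool * bool}.

Definition fsupp c (F : fault c) : {set vertex c} := [set v | F v != (false, false)].
Definition weight c (F : fault c) : nat := #|fsupp F|.

Definition eta c (k : nat) (P : pauli) : fault c :=
  [ffun v => if val v.2 == k then P v.1 else (false, false)].
Definition fmul c (F G : fault c) : fault c := [ffun v => pmul1 (F v) (G v)].
Definition fault1 c : fault c := [ffun _ => (false, false)].

(* F(u) = prod_j eta_{l_j - 0.5}(S_j^{u_j}) *)
Definition Fof c (u : seq bool) : fault c :=
  foldr (fun p acc => if p.1 then fmul (eta c p.2.2.-1 p.2.1) acc else acc)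
        (fault1 c) (zip u (meas c)).

Definition comp c (F : fault c) (k : nat) : pauli :=
  [ffun q => if (k < (depth c).+1)%N then F (q, inord k) else (false, false)].

(* P |-> U_l^{-1} P U_l (mod phases), U_l = product of the gates of level l *)
Definition conjLevel (c : circuit) (l : nat) (P : pauli) : pauli :=
  foldr (fun o acc => match o with
                      | Gate _ act _ l' => if l' == l then act acc else acc
                      | _ => acc end) P c.

(* back-cumulant: bcAux d = <-F_{depth - d + 0.5} *)
Fixpoint bcAux c (F : fault c) (d : nat) : pauli :=
  match d with
  | 0 => comp F (depth c)
  | d'.+1 => pmul (comp F (depth c - d'.+1)) (conjLevel c (depth c - d') (bcAux F d'))
  end.
Definition backcum c (F : fault c) : fault c :=
  [ffun v => bcAux F (depth c - val v.2) v.1].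

Definition stabilizer c (F : fault c) : Prop :=
  exists u, outcome_perp c u /\ F = backcum (Fof c u).

Definition adjG c (v w : vertex c) : bool :=
  (v != w) &&
  has (fun o => [&& v.1 \in op_qubits o, w.1 \in op_qubits o,
                   (val v.2 == (op_level o).-1) || (val v.2 == op_level o) &
                   (val w.2 == (op_level o).-1) || (val w.2 == op_level o)]) c.

Fixpoint ball c (v : vertex c) (r : nat) : {set vertex c} :=
  match r with
  | 0 => [set v]
  | r'.+1 => ball v r' :|: [set w | [exists x in ball v r', adjG x w]]
  end.

Definition connected_set c (S : {set vertex c}) : Prop :=
  S != set0 /\
  forall v w, v \in S -> w \in S ->
    connect [rel x y | [&& x \in S, y \in S & adjG x y]] v w.

Definition connected_stabilizer c (F : fault c) : Prop :=
  stabilizer F /\ connected_set (fsupp F).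

Definition stab_subgroup_in c (A : {set vertex c}) (F : fault c) : Prop :=
  stabilizer F /\ fsupp F \subset A.

Definition low_weight_output c (M : nat) (F : fault c) : Prop :=
  exists v : vertex c,
    [/\ stab_subgroup_in (ball v M./2) F, (weight F <= M)%N &
        connected_set (fsupp F)].

End Defs.

(* Main.v *)
Require Import Defs.
From mathcomp Require Import all_boot all_order all_algebra.
Set Implicit Arguments.
Unset Strict Implicit.
Unset Printing Implicit Defensive.

Section G.
Variables (T : finType) (e : rel T).
Hypothesis esym : symmetric e.
Implicit Types (S A : {set T}).

Definition eS (S : {set T}) : rel T := [rel x y | [&& x \in S, y \in S & e x y]].
Definition conn (S : {set T}) := forall v w, v \in S -> w \in S -> connect (eS S) v w.
Definition near S v w r := exists p, [/\ path (eS S) v p, last v p = w & size p <= r].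

Lemma eS_sym S : symmetric (eS S).
Proof. by move=> x y; rewrite /eS /= [e x y]esym andbCA. Qed.

Lemma conn_eq (S S' : {set T}) : S =i S' -> conn S -> conn S'.
Proof.
move=> eq cS v w; rewrite -!eq => vS wS; have := cS v w vS wS.
apply: connect_sub => x y exy; apply: connect1; by move: exy; rewrite /eS /= -!eq.
Qed.

Lemma conn1 a : conn [set a].
Proof. by move=> v w; rewrite !inE => /eqP-> /eqP->; exact: connect0. Qed.

Lemma conn0 S : #|S| = 0 -> conn S.
Proof. by move/cards0_eq->; move=> v w; rewrite inE. Qed.

Lemma path_sub (S S' : {set T}) x p : S \subset S' -> path (eS S) x p -> path (eS S') x p.
Proof.
move/subsetP=> sub; apply: sub_path => a b; rewrite /eS /= => /and3P[aS bS ->].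
by rewrite !sub.
Qed.

Lemma conn_sub (S S' : {set T}) x y : S \subset S' -> connect (eS S) x y -> connect (eS S') x y.
Proof.
move/subsetP=> sub; apply: connect_sub => a b; rewrite /eS /= => /and3P[aS bS eab].
by apply: connect1; rewrite /= !sub.
Qed.

Lemma conn_add A x y : conn A -> y \in A -> e x y -> conn (x |: A).
Proof.
move=> cA yA exy.
have sub a b : connect (eS A) a b -> connect (eS (x |: A)) a b.
  by apply: conn_sub; exact: subsetUr.
have xy : connect (eS (x |: A)) x y.
  by apply: connect1; rewrite /eS /= !inE eqxx yA orbT exy.
have yx : connect (eS (x |: A)) y x by rewrite (sym_connect_sym (eS_sym _)).
move=> v w; rewrite !inE => /predU1P[->|vA] /predU1P[->|wA].
- exact: connect0.
- exact: connect_trans xy (sub _ _ (cA _ _ yA wA)).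
- exact: connect_trans (sub _ _ (cA _ _ vA yA)) yx.
- exact: sub _ _ (cA _ _ vA wA).
Qed.

Lemma cross (r : rel T) (A : {set T}) x p : path r x p -> x \in A -> last x p \notin A ->
  exists a b, [/\ a \in A, b \notin A & r a b].
Proof.
elim: p x => [|y p IH] x /=; first by move=> _ ->.
case/andP=> rxy pp xA lA; case yA: (y \in A); first exact: IH yA lA.
by exists x, y; rewrite yA.
Qed.

Lemma prefix_to (r : rel T) x p u : path r x p -> u \in x :: p -> last x p != u ->
  exists q, [/\ path r x q, last x q = u & size q < size p].
Proof.
elim: p x => [|y p IH] x /=.
  by move=> _; rewrite inE => /eqP->; rewrite eqxx.
case/andP=> rxy pp; rewrite inE => /predU1P[-> _|uin lu]; first by exists [::].
have [q [pq lq sq]] := IH y pp uin lu.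
by exists (y :: q); rewrite /= rxy pq lq.
Qed.

Lemma path_avoid S u x p : path (eS S) x p -> x \in S -> u \notin x :: p ->
  path (eS (S :\ u)) x p.
Proof.
elim: p x => [|y p IH] x //= /andP[/and3P[_ yS exy] pp] xS.
rewrite !inE negb_or => /andP[xu]; rewrite negb_or => /andP[yu up].
rewrite eq_sym in xu; rewrite eq_sym in yu.
rewrite /eS /= !inE xu xS yu yS exy /=.
by apply: IH => //; rewrite inE negb_or eq_sym yu.
Qed.

Lemma near_card S v w : conn S -> v \in S -> w \in S -> near S v w (#|S|).-1.
Proof.
move=> cS vS wS; have /connectP[p pp ->] := cS v w vS wS.
case: (shortenP pp) => p' pp' up' _.
exists p'; split => //.
have sub : {subset v :: p' <= S}.
  clear pp; move=> z; rewrite inE => /predU1P[->//|]; elim: p' v pp' vS {up'} => //= y q IH x.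
  case/andP=> exy pq _; move: exy; rewrite /eS /= => /and3P[_ yS _].
  rewrite inE => /predU1P[->//|]; exact: (IH y pq yS).
have sub' : {subset v :: p' <= enum S} by move=> z /sub; rewrite mem_enum.
have := uniq_leq_size up' sub'; rewrite -cardE /=.
by case: #|S|.
Qed.

Lemma noncut S : conn S -> 1 < #|S| ->
  exists u, [/\ u \in S, conn (S :\ u) & exists y, y \in S :\ u /\ e u y].
Proof.
move=> cS cardS.
have [r rS] : exists r, r \in S by apply/card_gt0P; exact: ltnW.
pose dP w m := [exists t : m.-tuple T, path (eS S) r t && (last r t == w)].
have dPI w p : path (eS S) r p -> last r p = w -> dP w (size p).
  by move=> pp lp; apply/existsP; exists (in_tuple p); rewrite /= pp lp eqxx.
have dPE w m : dP w m -> exists p, [/\ path (eS S) r p, last r p = w & size p = m].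
  by case/existsP=> t /andP[pt /eqP lt]; exists (val t); rewrite size_tuple.
pose Q n := [exists w in S, [forall m : 'I_n, ~~ dP w m]].
have Q0 : exists n, Q n.
  by exists 0; apply/existsP; exists r; rewrite rS; apply/forallP => -[].
have Qb : forall n, Q n -> n <= #|T|.
  move=> n /existsP[w /andP[wS /forallP nd]].
  have /connectP[p pp lp] := cS r w rS wS.
  rewrite lp in nd; case: (shortenP pp) nd => p' pp' up' _ nd.
  rewrite leqNgt; apply/negP => ltn.
  have sz : size p' < n.
    have := max_card (mem (r :: p')); rewrite (card_uniqP up') /= => h.
    exact: leq_trans h (ltnW ltn).
  by move: (nd (Ordinal sz)); rewrite /= (dPI _ p').
case: (@ex_maxnP Q #|T| Q0 Qb) => n Qn maxn.
case/existsP: Qn => u /andP[uS /forallP nu].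
have n0 : 0 < n.
  have Q1 : Q 1.
    have : 0 < #|S :\ r| by move: cardS; rewrite (cardsD1 r) rS.
    case/card_gt0P => w; rewrite !inE => /andP[wr wS].
    apply/existsP; exists w; rewrite wS; apply/forallP => -[[|m] lt] //=.
    apply/negP => /dPE [p [_ lp sp]]; move: sp lp; case: p => //= _ rw.
    by rewrite rw eqxx in wr.
  exact: maxn 1 Q1.
have ru : r != u.
  apply/eqP => ru; move: (nu (Ordinal n0)); rewrite /= -ru.
  by rewrite (dPI r [::]).
have allw : forall w, w \in S -> w != u -> connect (eS (S :\ u)) r w.
  move=> w wS wu.
  have : ~~ Q n.+1 by apply/negP => /maxn; rewrite ltnn.
  rewrite negb_exists => /forallP /(_ w); rewrite wS /= negb_forall.
  case/existsP => m; rewrite negbK => /dPE [p [pp lp sp]].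
  apply/connectP; exists p; last by rewrite lp.
  apply: path_avoid => //; apply/negP => uin.
  have lpu : last r p != u by rewrite lp.
  have [q [pq lq sq]] := prefix_to pp uin lpu.
  have qn : size q < n by rewrite (leq_trans sq) // sp -ltnS.
  by move: (nu (Ordinal qn)); rewrite /= (dPI u q).
have rS' : r \in S :\ u by rewrite !inE ru rS.
exists u; split => //.
  move=> v w; rewrite !inE => /andP[vu vS] /andP[wu wS].
  apply: connect_trans _ (allw w wS wu).
  by rewrite (sym_connect_sym (eS_sym _)); exact: allw.
have /connectP[p pp lp] := cS r u rS uS.
have lpA : last r p \notin S :\ u by rewrite -lp !inE eqxx.
have [a [b [aA bA eab]]] := cross pp rS' lpA.
move: eab; rewrite /eS /= => /and3P[_ bS eab].
move: bA; rewrite !inE bS andbT negbK => /eqP bu.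
by exists a; split => //; rewrite esym -bu.
Qed.

Lemma cardD1S S u : u \in S -> #|S| = (#|S :\ u|).+1.
Proof. by move=> uS; rewrite (cardsD1 u S) uS add1n. Qed.

Definition goodpair S u1 u2 := [/\ u1 \in S, u2 \in S, u1 != u2, conn (S :\ u1 :\ u2) &
  (#|S| = 2 -> e u1 u2) /\ (2 < #|S| -> (exists y, y \in S :\ u1 :\ u2 /\ e u1 y) /\
     (exists y, y \in S :\ u1 :\ u2 /\ e u2 y))].

Lemma pair k S : #|S| = k.+2 -> conn S -> exists u1 u2, goodpair S u1 u2.
Proof.
elim: k S => [|k IH] S cS conS.
  have := noncut conS; rewrite cS => /(_ isT) [u [uS cu [y [yS' euy]]]].
  exists u, y; move: yS'; rewrite !inE => /andP[yu yS].
  split => //; first by rewrite eq_sym.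
    apply: conn0; move: cS; rewrite (cardD1S uS) (@cardD1S (S :\ u) y); last by rewrite !inE yu yS.
    by case.
  by rewrite cS.
have := noncut conS; rewrite cS => /(_ isT) [u [uS cu [y [yS' euy]]]].
have cS' : #|S :\ u| = k.+2 by move: cS; rewrite (cardD1S uS) => -[].
have [a [b [aS' bS' ab conn2 [c2 c3]]]] := IH _ cS' cu.
move: aS' bS'; rewrite !inE => /andP[au aS] /andP[bu bS].
have ua : u != a by rewrite eq_sym.
have ub : u != b by rewrite eq_sym.
have ba : b != a by rewrite eq_sym.
move: yS'; rewrite in_setD1 => /andP[yu yS].
case: k IH cS cS' c2 c3 => [|k] IH cS cS' c2 c3.
  have eab := c2 cS'.
  have S2e : #|S :\ u :\ a :\ b| = 0.
    move: cS'; rewrite (@cardD1S (S :\ u) a) ?inE ?au ?aS // => -[].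
    by rewrite (@cardD1S (S :\ u :\ a) b) ?inE ?ba ?bu ?bS // => -[].
  have hS z : z \in S -> [|| z == u, z == a | z == b].
    move=> zS; apply/negPn/negP; rewrite !negb_or => /and3P[zu za zb].
    have : z \in S :\ u :\ a :\ b by rewrite !inE zu za zb zS.
    by rewrite (cards0_eq S2e) inE.
  have := hS y yS; rewrite (negbTE yu) /= => /orP[/eqP ya|/eqP yb].
    exists u, b; split => //.
      apply: (@conn_eq [set a]); last exact: conn1.
      move=> z; rewrite !inE; case: (z =P a) => [->|/eqP za]; first by rewrite ab au aS.
      case zS: (z \in S); last by rewrite !andbF.
      by have := hS z zS; rewrite (negbTE za) /= => /orP[] /eqP->; rewrite eqxx ?andbF.
    split; first by rewrite cS.
    have aA : a \in S :\ u :\ b by rewrite !inE ab au aS.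
    by move=> _; split; exists a; split => //; [rewrite -ya | rewrite esym].
  exists a, u; split => //.
    apply: (@conn_eq [set b]); last exact: conn1.
    move=> z; rewrite !inE; case: (z =P b) => [->|/eqP zb]; first by rewrite bu ba bS.
    case zS: (z \in S); last by rewrite !andbF.
    by have := hS z zS; rewrite (negbTE zb) orbF => /orP[] /eqP->; rewrite eqxx ?andbF.
  split; first by rewrite cS.
  have bA : b \in S :\ a :\ u by rewrite !inE bu ba bS.
  by move=> _; split; exists b; split => //; rewrite -yb.
have [[ya [ya2 eaya]] [yb [yb2 ebyb]]] := c3 (ltac:(by rewrite cS')).
move: (ya2) (yb2); rewrite !inE => /and3P[yab yaa /andP[yau yaS]] /and3P[ybb yba /andP[ybu ybS]].
case: (y =P a) => [ya_|/eqP yna].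
  exists u, b; split => //.
    apply: (@conn_eq (a |: S :\ u :\ a :\ b)); last exact: conn_add conn2 ya2 eaya.
    move=> z; rewrite !inE; case: (z =P a) => [->|/eqP za]; first by rewrite ab au aS.
    by [].
  split; first by rewrite cS.
  move=> _; split; [exists a | exists yb]; rewrite !inE ?ab ?au ?aS -?ya_ //.
  by rewrite ybb ybu ybS.
case: (y =P b) => [yb_|/eqP ynb].
  exists a, u; split => //.
    apply: (@conn_eq (b |: S :\ u :\ a :\ b)); last exact: conn_add conn2 yb2 ebyb.
    move=> z; rewrite !inE; case: (z =P b) => [->|/eqP zb]; first by rewrite bu ba bS.
    by rewrite /= andbCA.
  split; first by rewrite cS.
  move=> _; split; [exists ya | exists b]; rewrite !inE ?bu ?ba ?bS -?yb_ //.
  by rewrite yau yaa yaS.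
have yS2 : y \in S :\ u :\ a :\ b by rewrite !inE ynb yna yu yS.
exists a, b; split => //.
  apply: (@conn_eq (u |: S :\ u :\ a :\ b)); last exact: conn_add conn2 yS2 euy.
  move=> z; rewrite !inE; case: (z =P u) => [->|/eqP zu]; first by rewrite ub ua uS.
  by [].
split; first by rewrite cS.
move=> _; split; [exists ya | exists yb]; rewrite !inE.
  by rewrite yab yaa yaS.
by rewrite ybb yba ybS.
Qed.

Lemma near_ext S S' v w y r : S \subset S' -> near S v y r -> y \in S -> w \in S' -> e y w ->
  near S' v w r.+1.
Proof.
move=> sub [p [pp lp sp]] yS wS eyw; exists (rcons p w); split.
- rewrite rcons_path (path_sub sub pp) lp /eS /= eyw wS andbT.
  by rewrite andbT; move/subsetP: sub; apply.
- by rewrite last_rcons.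
- by rewrite size_rcons.
Qed.

Lemma near_mono S S' v w r r' : S \subset S' -> r <= r' -> near S v w r -> near S' v w r'.
Proof.
move=> sub rr [p [pp lp sp]]; exists p; split => //; first exact: path_sub sub pp.
exact: leq_trans sp rr.
Qed.

Lemma radius N : forall k S, k <= N -> #|S| = k.+1 -> conn S ->
  exists v, v \in S /\ forall w, w \in S -> near S v w (k.+1)./2.
Proof.
elim: N => [|N IH] k S kN cS conS.
  have [v vS] : exists v, v \in S by apply/card_gt0P; rewrite cS.
  exists v; split => // w wS; have := near_card conS vS wS; rewrite cS.
  by move: kN; rewrite leqn0 => /eqP->.
case: k kN cS => [|[|k]] kN cS.
- have [v vS] : exists v, v \in S by apply/card_gt0P; rewrite cS.
  by exists v; split => // w wS; have := near_card conS vS wS; rewrite cS.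
- have [v vS] : exists v, v \in S by apply/card_gt0P; rewrite cS.
  by exists v; split => // w wS; have := near_card conS vS wS; rewrite cS.
have [u1 [u2 [u1S u2S u12 conn2 [_ c3]]]] := pair cS conS.
have [[y1 [y1S2 e1]] [y2 [y2S2 e2]]] := c3 (ltac:(by rewrite cS)).
have sub : S :\ u1 :\ u2 \subset S by apply/subsetP => z; rewrite !inE => /and3P[_ _ ->].
have cS2 : #|S :\ u1 :\ u2| = k.+1.
  move: cS; rewrite (cardD1S u1S) (@cardD1S (S :\ u1) u2) ?inE ?u2S 1?eq_sym ?u12 //.
  by case.
have [v [vS2 hv]] := IH k _ (ltnW kN) cS2 conn2.
exists v; split; first by move/subsetP: sub; apply.
move=> w wS.
have y1S : y1 \in S by move/subsetP: sub; apply.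
have y2S : y2 \in S by move/subsetP: sub; apply.
case: (w =P u1) => [->|/eqP wu1].
  by apply: (near_ext sub (hv _ y1S2)) => //; rewrite esym.
case: (w =P u2) => [->|/eqP wu2].
  by apply: (near_ext sub (hv _ y2S2)) => //; rewrite esym.
apply: (near_mono sub _ (hv w _)); first by apply: half_leq; rewrite ltnW.
by rewrite !inE wu1 wu2 wS.
Qed.
End G.

Section Main.
Variables (C : numClosedFieldType) (n : nat) (c : circuit C n).

Lemma adjG_sym : symmetric (@adjG C n c).
Proof.
move=> v w; rewrite /adjG eq_sym; congr andb; apply: eq_has => o /=.
by apply/and4P/and4P => -[*]; split.
Qed.

Lemma ball_mono (v : vertex c) a b : a <= b -> ball v a \subset ball v b.
Proof.
elim: b => [|b IH]; first by rewrite leqn0 => /eqP->.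
rewrite leq_eqVlt ltnS => /predU1P[->//|ab].
apply: subset_trans (IH ab) _; exact: subsetUl.
Qed.

Lemma path_ball S (v : vertex c) p : path (eS (@adjG C n c) S) v p ->
  last v p \in ball v (size p).
Proof.
elim/last_ind: p => [|p x IH] /=; first by rewrite inE.
rewrite rcons_path last_rcons size_rcons => /andP[pp ex].
rewrite /= inE; apply/orP; right; rewrite inE; apply/existsP; exists (last v p).
by rewrite IH //; move: ex; rewrite /eS /= => /and3P[_ _ ->].
Qed.

End Main.

Theorem mainTheorem13 (C : numClosedFieldType) (n : nat) (c : circuit C n) (M : nat) :
  wf_circuit c -> linear_outcome_code c -> (0 < M)%N ->
  forall F : fault c,
    low_weight_output M F <-> (connected_stabilizer F /\ (weight F <= M)%N).
Proof.
move=> _ _ M0 F; split.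
  by case=> v [[st sub] wF cF]; split.
case=> [[st cF] wF].
have [ne conS] := cF.
have conS' : conn (@adjG C n c) (fsupp F) by exact: conS.
move: wF; rewrite /weight.
case eq: #|fsupp F| => [|k] wF.
  by move: ne; rewrite -card_gt0 eq.
have [v [vS hv]] := radius (@adjG_sym C n c) (leqnn k) eq conS'.
exists v; split => //; first split => //; last by rewrite /weight eq.
apply/subsetP => w wS; have [p [pp lp sp]] := hv w wS.
rewrite -lp; apply: (subsetP (ball_mono v _)) (path_ball pp).
exact: leq_trans sp (half_leq wF).
Qed.
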